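(* Let $G$ be a star-like block graph on $n$ vertices with blocks $B_1,\dots,B_t$ of orders $b_1,\dots,b_t$, and let $k$ be an integer with $2\le k\le n$. Then $$SW_k(G)=(n-1)\binom{n-1}{k-1}-\sum_{i=1}^t\binom{b_i-1}{k}.$$
   Context: A block graph is a connected graph in which every block (maximal connected induced subgraph without cut vertices) is a clique. A star-like block graph is a block graph having a universal vertex (a vertex adjacent to all other vertices). For $S\subseteq V(G)$, the Steiner distance $d(S)$ is the minimum number of edges of a connected subgraph whose vertex set contains $S$, and $SW_k(G)=\sum_{|S|=k} d(S)$. Convention $\binom{m}{l}=0$ for $m<l$. *)

(* Defs.v *)
From mathcomp Require Import all_boot.
Set Implicit Arguments. Unset Strict Implicit. Unset Printing Implicit Defensive.

Section Graphs.
Variable T : finType.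
Variable e : rel T. (* simple graph: e symmetric and irreflexive (hypotheses) *)

Definition connected_graph : bool := [forall x, forall y, connect e x y].

Definition restrict (S : {set T}) : rel T :=
  fun x y => [&& x \in S, y \in S & e x y].

Definition connected_in (S : {set T}) : bool :=
  [forall x in S, forall y in S, connect (restrict S) x y].

Definition no_cut_vertex (S : {set T}) : bool :=
  [forall v in S, connected_in (S :\ v)].

Definition is_block (S : {set T}) : bool :=
  [&& S != set0, connected_in S, no_cut_vertex S &
   [forall S' : {set T},
      [&& S \subset S', connected_in S' & no_cut_vertex S'] ==> (S' == S)]].

Definition is_clique (S : {set T}) : bool :=
  [forall x in S, forall y in S, (x != y) ==> e x y].

Definition block_graph : bool :=
  connected_graph && [forall B : {set T}, is_block B ==> is_clique B].

Definition universal_vertex (u : T) : bool := [forall v, (v != u) ==> e u v].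

Definition star_like_block_graph : bool :=
  block_graph && [exists u, universal_vertex u].

(* p = (W, F): a subgraph with vertex set W and edge set F (edges as 2-sets),
   connected, whose vertex set contains S *)
Definition steiner_sub (S : {set T}) (p : {set T} * {set {set T}}) : bool :=
  [&& S \subset p.1,
      [forall f in p.2, exists x, exists y,
          [&& e x y, f == [set x; y], x \in p.1 & y \in p.1]] &
      [forall x in p.1, forall y in p.1,
          connect (fun a b => [set a; b] \in p.2) x y]].

(* Steiner distance d(S): minimum number of edges of such a subgraph.
   The default value #|{set T}| bounds every candidate's edge count. *)
Definition steiner_dist (S : {set T}) : nat :=
  \big[minn/#|{: {set T}}|]_(p : {set T} * {set {set T}} | steiner_sub S p) #|p.2|.

Definition SW (k : nat) : nat :=
  \sum_(S : {set T} | #|S| == k) steiner_dist S.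

End Graphs.

(* Main.v *)
Require Import Defs.
From mathcomp Require Import all_boot zify.
Set Implicit Arguments. Unset Strict Implicit. Unset Printing Implicit Defensive.

Section LB.
Variable T : finType.
Variable F : {set {set T}}.
Let r : rel T := fun a b => [set a; b] \in F.
Variable x0 : T.

Fixpoint reach (n : nat) (v : T) : bool :=
  if n is m.+1 then reach m v || [exists w, r v w && reach m w] else v == x0.

Definition dist (v : T) : nat := find (fun n => reach n v) (iota 0 #|T|).

Lemma path_reach (p : seq T) (v : T) : path r v p -> last v p = x0 -> reach (size p) v.
Proof.
elim: p v => [|w p IH] v /=; first by move=> _ ->.
case/andP=> Hvw Hp Hl; apply/orP; right; apply/existsP; exists w.
by rewrite Hvw IH.
Qed.

Lemma dist_spec m v : m < #|T| -> reach m v -> reach (dist v) v /\ dist v <= m.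
Proof.
move=> Hm Hr.
have Hh : has (fun n => reach n v) (iota 0 #|T|).
  by apply/hasP; exists m => //; rewrite mem_iota.
have Hlt : dist v < #|T| by rewrite /dist -{2}(size_iota 0 #|T|) -has_find.
split.
  by have := nth_find 0 Hh; rewrite -/(dist v) nth_iota.
rewrite leqNgt; apply/negP => Hdm.
have := before_find 0 (Hdm : m < dist v); rewrite nth_iota ?add0n ?Hr //.
Qed.

Lemma connect_reach v : connect r v x0 -> exists2 m, m < #|T| & reach m v.
Proof.
case/connectP=> p Hp Hl.
case/shortenP: Hp Hl => p' Hp' Hu _ Hl'.
exists (size p'); last exact: path_reach.
have := card_uniqP Hu; rewrite /= => Hc.
by have := max_card (mem (v :: p')); rewrite Hc.
Qed.

Lemma dist_step v : connect r v x0 -> v != x0 ->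
  exists w, r v w && (dist w < dist v).
Proof.
move=> Hc Hv.
have [m Hm Hr] := connect_reach Hc.
have [Hd Hdm] := dist_spec Hm Hr.
have Hdlt : dist v < #|T| by exact: leq_ltn_trans Hdm Hm.
move: Hd Hdlt; case Ed: (dist v) => [|d] /=.
  by rewrite (negbTE Hv).
case/orP=> [Hrd|].
  move=> Hdlt; have := (dist_spec (ltnW Hdlt) Hrd).2; by rewrite Ed ltnn.
case/existsP=> w /andP[Hvw Hw] Hdlt.
exists w; rewrite Hvw /=.
by rewrite ltnS; exact: (dist_spec (ltnW Hdlt) Hw).2.
Qed.

Lemma LB (W : {set T}) : x0 \in W -> (forall v, v \in W -> connect r v x0) ->
  #|W| <= #|F|.+1.
Proof.
move=> Hx0 Hc.
pose g v := [set v; odflt v [pick w | r v w && (dist w < dist v)]].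
have Hg : forall v, v \in W :\ x0 -> r v (odflt v [pick w | r v w && (dist w < dist v)])
    && (dist (odflt v [pick w | r v w && (dist w < dist v)]) < dist v).
  move=> v /setD1P[Hv HvW].
  case: pickP => [w Hw //|Hn].
  have [w Hw] := dist_step (Hc v HvW) Hv.
  by rewrite Hn in Hw.
have Hinj : {in W :\ x0 &, injective g}.
  move=> v1 v2 H1 H2 Heq; apply/eqP; apply/negPn/negP => Hne.
  have := Hg _ H1; have := Hg _ H2.
  move: Heq; rewrite /g.
  set w1 := odflt v1 _; set w2 := odflt v2 _ => Heq /andP[_ Hd2] /andP[_ Hd1].
  have : v1 \in [set v2; w2] by rewrite -Heq set21.
  have : v2 \in [set v1; w1] by rewrite Heq set21.
  rewrite !inE => /orP[/eqP E2|/eqP E2]; first by rewrite E2 eqxx in Hne.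
  move=> /orP[/eqP E1|/eqP E1]; first by rewrite E1 eqxx in Hne.
  by move: Hd1 Hd2; rewrite -E1 -E2 => H1' H2'; have := ltn_trans H1' H2'; rewrite ltnn.
have Hsub : g @: (W :\ x0) \subset F.
  apply/subsetP => f /imsetP[v Hv ->]; exact: (andP (Hg v Hv)).1.
have := subset_leq_card Hsub; rewrite (card_in_imset Hinj).
by rewrite (cardsD1 x0 W) Hx0 add1n ltnS.
Qed.
End LB.
Section G.
Variable T : finType.
Variable e : rel T.
Hypothesis sym : symmetric e.
Hypothesis irr : irreflexive e.
Variable u : T.
Hypothesis univ : forall v, v != u -> e u v.
Hypothesis cliq : forall B, is_block e B -> is_clique e B.

Definition Pc (S : {set T}) := connected_in e S && no_cut_vertex e S.

Lemma Lstar (S : {set T}) c : c \in S -> (forall a, a \in S -> a != c -> e c a) ->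
  connected_in e S.
Proof.
move=> Hc Ha; apply/forall_inP => a HaS; apply/forall_inP => b HbS.
apply: (@connect_trans _ _ c).
  case: (eqVneq a c) => [->|Hac]; first exact: connect0.
  by apply: connect1; rewrite /restrict HaS Hc sym Ha.
case: (eqVneq b c) => [->|Hbc]; first exact: connect0.
by apply: connect1; rewrite /restrict HbS Hc Ha.
Qed.

Lemma Lclique (S : {set T}) : is_clique e S -> connected_in e S.
Proof.
move=> /forall_inP Hq; apply/forall_inP => a HaS; apply/forall_inP => b HbS.
case: (eqVneq a b) => [->|Hab]; first exact: connect0.
apply: connect1; rewrite /restrict HaS HbS /=.
by have /forall_inP := Hq a HaS => /(_ b HbS); rewrite Hab.
Qed.

Lemma clique_sub (A B : {set T}) : A \subset B -> is_clique e B -> is_clique e A.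
Proof.
move=> /subsetP HAB /forall_inP Hq; apply/forall_inP => a Ha; apply/forall_inP => b Hb.
by have /forall_inP := Hq a (HAB _ Ha) => /(_ b (HAB _ Hb)).
Qed.

Lemma Asub (X : {set T}) : X != set0 -> Pc X -> exists2 B, is_block e B & X \subset B.
Proof.
move=> Hne HP.
have HX : Pc X && (X \subset X) by rewrite HP subxx.
case: (@arg_maxnP _ X (fun B => Pc B && (X \subset B)) (fun B : {set T} => #|B|) HX) => B /andP[HB HXB] Hmax.
exists B => //.
apply/and4P; split.
- apply/set0Pn; case/set0Pn: Hne => x Hx; exists x; exact: (subsetP HXB).
- by case/andP: HB.
- by case/andP: HB.
- apply/forallP => S'; apply/implyP => /and3P[HBS HS1 HS2].
  have HS : Pc S' && (X \subset S') by rewrite /Pc HS1 HS2 (subset_trans HXB HBS).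
  have := Hmax _ HS => Hc.
  by rewrite eq_sym eqEcard HBS; exact: Hc.
Qed.

Lemma PU (S : {set T}) : u \in S -> is_clique e (S :\ u) -> Pc S.
Proof.
move=> Hu Hq; apply/andP; split.
  apply: (Lstar Hu) => a _ Ha; exact: univ.
apply/forall_inP => v Hv.
case: (eqVneq v u) => [->|Hvu]; first exact: Lclique.
apply: (@Lstar _ u); first by rewrite !inE eq_sym Hvu.
move=> a _ Ha; exact: univ.
Qed.

Lemma blockP (B S : {set T}) : is_block e B -> B \subset S -> Pc S -> S = B.
Proof.
case/and4P=> _ _ _ /forallP Hm HBS /andP[H1 H2].
by apply/eqP; have /implyP := Hm S; apply; rewrite HBS H1 H2.
Qed.

Lemma T1 x y z : x != u -> y != u -> z != u -> x != z -> e x y -> e y z -> e x z.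
Proof.
move=> Hx Hy Hz Hxz Exy Eyz.
pose X := [set u; x; y; z].
have HuX : u \in X by rewrite !inE eqxx.
have HxX : x \in X by rewrite !inE eqxx orbT.
have HzX : z \in X by rewrite !inE eqxx !orbT.
have HP : Pc X.
  apply/andP; split.
    apply: (Lstar HuX) => a _ Ha; exact: univ.
  apply/forall_inP => v Hv.
  case: (eqVneq v u) => [->|Hvu].
    apply: (@Lstar _ y); first by rewrite !inE Hy !eqxx !orbT.
    move=> a; rewrite !inE => /andP[Hau]; rewrite (negbTE Hau) /=.
    case/orP=> [/orP[]|] /eqP -> Hne; [by rewrite sym | by rewrite eqxx in Hne | by []].
  apply: (@Lstar _ u); first by rewrite !inE eq_sym Hvu eqxx.
  move=> a _ Ha; exact: univ.
have HXn : X != set0 by apply/set0Pn; exists u.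
have [B HB HXB] := Asub HXn HP.
have /forall_inP Hq := cliq HB.
have /forall_inP := Hq x (subsetP HXB _ HxX) => /(_ z (subsetP HXB _ HzX)).
by rewrite Hxz.
Qed.

Lemma cliqE (B : {set T}) a b : is_clique e B -> a \in B -> b \in B -> a != b -> e a b.
Proof.
move=> /forall_inP Hq Ha Hb Hab.
by have /forall_inP := Hq a Ha => /(_ b Hb); rewrite Hab.
Qed.

Lemma blk_u (B : {set T}) : is_block e B -> u \in B.
Proof.
move=> HB.
have HP : Pc (u |: B).
  apply: PU; first by rewrite !inE eqxx.
  apply: (clique_sub _ (cliq HB)).
  by apply/subsetP => a; rewrite !inE => /andP[/negbTE -> ].
have := blockP HB (subsetUr _ _) HP => <-.
by rewrite !inE eqxx.
Qed.

Lemma blk_inter (B1 B2 : {set T}) x : is_block e B1 -> is_block e B2 ->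
  x \in B1 -> x \in B2 -> x != u -> B1 = B2.
Proof.
move=> H1 H2 Hx1 Hx2 Hxu.
have Hq1 := cliq H1; have Hq2 := cliq H2.
have HP : Pc (B1 :|: B2).
  apply: PU; first by rewrite inE (blk_u H1).
  apply/forall_inP => a; rewrite !inE => /andP[Hau Ha].
  apply/forall_inP => b; rewrite !inE => /andP[Hbu Hb].
  apply/implyP => Hab.
  case/orP: Ha => Ha; case/orP: Hb => Hb.
  - exact: (cliqE Hq1).
  - case: (eqVneq a x) => [Eax|Hax].
      by apply: (cliqE Hq2) => //; rewrite Eax.
    case: (eqVneq b x) => [Ebx|Hbx].
      by apply: (cliqE Hq1) => //; rewrite Ebx.
    apply: (@T1 a x b) => //.
      exact: (cliqE Hq1).
    by apply: (cliqE Hq2) => //; rewrite eq_sym.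
  - case: (eqVneq a x) => [Eax|Hax].
      by apply: (cliqE Hq1) => //; rewrite Eax.
    case: (eqVneq b x) => [Ebx|Hbx].
      by apply: (cliqE Hq2) => //; rewrite Ebx.
    apply: (@T1 a x b) => //.
      exact: (cliqE Hq2).
    by apply: (cliqE Hq1) => //; rewrite eq_sym.
  - exact: (cliqE Hq2).
have E1 := blockP H1 (subsetUl _ _) HP.
have E2 := blockP H2 (subsetUr _ _) HP.
by rewrite -[LHS]E1 E2.
Qed.

Lemma clique_block (S : {set T}) : S != set0 -> u \notin S -> is_clique e S ->
  exists2 B, is_block e B & S \subset B :\ u.
Proof.
move=> Hne Hu Hq.
have HP : Pc (u |: S).
  apply: PU; first by rewrite !inE eqxx.
  apply: (clique_sub _ Hq).
  by apply/subsetP => a; rewrite !inE => /andP[/negbTE -> ].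
have Hne' : u |: S != set0 by apply/set0Pn; exists u; rewrite !inE eqxx.
have [B HB Hsub] := Asub Hne' HP.
exists B => //; apply/subsetP => a Ha; rewrite !inE.
have -> : a != u by apply: contraNneq Hu => <-.
by rewrite (subsetP Hsub) // !inE Ha orbT.
Qed.

Lemma edge_info (S : {set T}) p a b : steiner_sub e S p -> [set a; b] \in p.2 ->
  [/\ a \in p.1, b \in p.1 & e a b].
Proof.
case/and3P=> _ /forall_inP Hf _ Hab.
case/existsP: (Hf _ Hab) => x /existsP[y /and4P[Exy /eqP Eq Hx Hy]].
have Ha : a \in [set x; y] by rewrite -Eq set21.
have Hb : b \in [set x; y] by rewrite -Eq set22.
have Hxa : x \in [set a; b] by rewrite Eq set21.
have Hya : y \in [set a; b] by rewrite Eq set22.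
have Hxy : x != y by apply: contraTneq Exy => ->; rewrite irr.
move: Ha Hb Hxa Hya; rewrite !inE.
case/orP=> /eqP Ea; case/orP=> /eqP Eb; rewrite ?Ea ?Eb.
- move=> _ /orP[] /eqP Eyx; by move: Hxy; rewrite Eyx eqxx.
- by move=> *; split.
- by move=> *; split; rewrite // sym.
- move=> /orP[] /eqP Exy' _; by move: Hxy; rewrite Exy' eqxx.
Qed.

Lemma steiner_lb (S : {set T}) p : steiner_sub e S p -> S != set0 -> #|p.1| <= #|p.2|.+1.
Proof.
move=> Hs /set0Pn[x Hx].
case/and3P: Hs => HSW _ /forall_inP Hc.
have HxW := subsetP HSW _ Hx.
apply: (@LB _ _ x) => // v Hv.
by have /forall_inP := Hc v Hv => /(_ x HxW).
Qed.

Lemma no_u_clique (S : {set T}) p : steiner_sub e S p -> u \notin p.1 -> is_clique e S.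
Proof.
move=> Hs HuW.
have HuW' : forall z, z \in p.1 -> z != u by move=> z Hz; apply: contraNneq HuW => <-.
case/and3P: (Hs) => HSW _ /forall_inP Hc.
apply/forall_inP => x Hx; apply/forall_inP => y Hy; apply/implyP => Hxy.
have HxW := subsetP HSW _ Hx; have HyW := subsetP HSW _ Hy.
have Hcon : connect (fun a b => [set a; b] \in p.2) x y.
  by have /forall_inP := Hc x HxW => /(_ y HyW).
pose Q := [pred z | (z == x) || e x z].
have HQ1 : forall z z', [set z; z'] \in p.2 -> z \in Q -> z' \in Q.
  move=> z z' Hzz'; case: (edge_info Hs Hzz') => Hz Hz' Ezz'.
  rewrite !inE => /orP[/eqP Ez|Exz]; first by rewrite -Ez Ezz' orbT.
  case: (eqVneq z' x) => [//|Hz'x] /=.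
  apply: (@T1 x z z') => //; try exact: HuW'.
  by rewrite eq_sym.
have Hcl : closed (fun a b => [set a; b] \in p.2) Q.
  move=> z z' Hzz'; apply/idP/idP; first exact: HQ1.
  by apply: HQ1; rewrite setUC.
have := closed_connect Hcl Hcon; rewrite !inE eqxx /= => /esym.
by rewrite eq_sym (negbTE Hxy).
Qed.

Lemma star_sub (S W : {set T}) c : S \subset W -> c \in W ->
  (forall a, a \in W -> a != c -> e c a) ->
  steiner_sub e S (W, [set [set c; a] | a in W :\ c]).
Proof.
move=> HSW HcW Hc; apply/and3P; split => //=.
  apply/forall_inP => f /imsetP[a /setD1P[Hac HaW] ->].
  apply/existsP; exists c; apply/existsP; exists a.
  by rewrite Hc // eqxx HcW HaW.
apply/forall_inP => a HaW; apply/forall_inP => b HbW.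
have Ha : forall a, a \in W -> connect (fun a b => [set a; b] \in [set [set c; a0] | a0 in W :\ c]) c a.
  move=> a' Ha'; case: (eqVneq a' c) => [->|Hne]; first exact: connect0.
  by apply: connect1; apply/imsetP; exists a' => //; rewrite !inE Hne Ha'.
apply: (@connect_trans _ _ c); last exact: Ha.
case: (eqVneq a c) => [->|Hne]; first exact: connect0.
by apply: connect1; rewrite setUC; apply/imsetP; exists a => //; rewrite !inE Hne HaW.
Qed.

Lemma star_card (W : {set T}) c : c \in W ->
  #|[set [set c; a] | a in W :\ c]| = #|W| - 1.
Proof.
move=> HcW.
rewrite card_in_imset; first by rewrite (cardsD1 c W) HcW add1n subn1.
move=> a1 a2 /setD1P[H1 _] /setD1P[H2 _] Heq.
have : a1 \in [set c; a2] by rewrite -Heq set22.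
by rewrite !inE (negbTE H1) => /eqP.
Qed.
End G.

Lemma bigmin_eq (I : finType) (P : pred I) (f : I -> nat) D m : m <= D ->
  (exists2 i, P i & f i = m) -> (forall i, P i -> m <= f i) ->
  \big[minn/D]_(i | P i) f i = m.
Proof.
move=> HD [i Hi Hfi] Hall; apply/eqP; rewrite eqn_leq; apply/andP; split.
  rewrite -Hfi.
  have : i \in index_enum I by rewrite mem_index_enum.
  elim: (index_enum I) => [//|j r IH]; rewrite inE big_cons.
  case/orP=> [/eqP <-|Hr]; first by rewrite Hi geq_minl.
  by case: (P j); rewrite ?IH // geq_min IH ?orbT.
apply: (big_ind (fun x => m <= x)) => //; by move=> x y Hx Hy; rewrite leq_min Hx Hy.
Qed.

Section G2.
Variable T : finType.
Variable e : rel T.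
Hypothesis sym : symmetric e.
Hypothesis irr : irreflexive e.
Variable u : T.
Hypothesis univ : forall v, v != u -> e u v.
Hypothesis cliq : forall B, is_block e B -> is_clique e B.

Lemma sd_val (S : {set T}) : S != set0 ->
  steiner_dist e S = if (u \in S) || is_clique e S then #|S| - 1 else #|S|.
Proof.
move=> Hne; rewrite /steiner_dist; apply: bigmin_eq.
- have H1 : #|T| <= #|{: {set T}}| by apply: (leq_card (@set1 T)); exact: set1_inj.
  apply: leq_trans H1; case: ifP => _; [exact: leq_trans (leq_subr _ _) (max_card _) | exact: max_card].
- case Hu: (u \in S) => /=.
    exists (S, [set [set u; a] | a in S :\ u]); last by rewrite /= star_card.
    apply: star_sub => //; move=> a _ Ha; exact: univ.
  case Hq: (is_clique e S).
    case/set0Pn: Hne => x Hx.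
    exists (S, [set [set x; a] | a in S :\ x]); last by rewrite /= star_card.
    apply: star_sub => // a Ha Hax.
    by apply: (cliqE Hq) => //; rewrite eq_sym.
  exists (u |: S, [set [set u; a] | a in (u |: S) :\ u]).
    apply: star_sub; [exact: subsetUr | by rewrite !inE eqxx |].
    move=> a _ Ha; exact: univ.
  by rewrite /= star_card ?cardsU1 ?Hu ?add1n ?subn1 // !inE eqxx.
- move=> p Hp.
  have H1 := steiner_lb Hp Hne.
  have H2 : #|S| <= #|p.1| by apply: subset_leq_card; case/and3P: Hp.
  case: ifP => Hg.
    by rewrite leq_subLR add1n; exact: leq_trans H2 H1.
  have HuW : u \in p.1.
    apply/negPn/negP => HuW; have := no_u_clique sym irr univ cliq Hp HuW.
    by move: Hg => /negbT; rewrite negb_or => /andP[_ /negbTE ->].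
  have H3 : #|u |: S| <= #|p.1|.
    apply: subset_leq_card; apply/subsetP => a; rewrite !inE => /orP[/eqP ->//|Ha].
    by apply: (subsetP _ a Ha); case/and3P: Hp.
  move: H3; rewrite cardsU1; move: Hg => /negbT; rewrite negb_or => /andP[-> _].
  rewrite add1n => H3; have := leq_trans H3 H1; by rewrite ltnS.
Qed.
End G2.

Lemma sum_bool (I : finType) (P Q : pred I) :
  \sum_(i | P i) (Q i : nat) = #|[set i | P i && Q i]|.
Proof.
rewrite -sum1dep_card big_mkcondr /=; apply: eq_bigr => i _; by case: (Q i).
Qed.

Lemma arith n k : 2 <= k <= n -> (k - 1) * 'C(n, k) + 'C(n - 1, k) = (n - 1) * 'C(n - 1, k - 1).
Proof.
case: n => [|n]; first by case: k => [|[|k]].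
case: k => [|[|k]] //= _.
rewrite !subn1 /=.
have := binS n k.+1; have := mul_bin_diag n.+1 k.+1 => /=.
set A := 'C(n, k.+1); set B := 'C(n, k.+2); set C := 'C(n.+1, k.+2).
move=> H1 H2. nia.
Qed.

Theorem mainTheorem6 (T : finType) (e : rel T) (k : nat) :
  symmetric e -> irreflexive e ->
  star_like_block_graph e ->
  2 <= k <= #|T| ->
  SW e k = (#|T| - 1) * 'C(#|T| - 1, k - 1)
           - \sum_(B : {set T} | is_block e B) 'C(#|B| - 1, k).
Proof.
move=> sym irr /andP[/andP[_ /forallP Hbl] /existsP[u /forallP Hu]] Hk.
have univ : forall v, v != u -> e u v by move=> v; exact/implyP.
have cliq : forall B, is_block e B -> is_clique e B by move=> B; exact/implyP.
have Hk2 : 2 <= k by case/andP: Hk.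
have Hne : forall S : {set T}, #|S| == k -> S != set0.
  by move=> S /eqP HS; apply/set0Pn/card_gt0P; rewrite HS; apply: ltn_trans Hk2.
have Hper : forall S : {set T}, #|S| == k ->
    \sum_(B | is_block e B) ((S \subset B :\ u) : nat) = ((u \notin S) && is_clique e S : nat).
  move=> S HS; have HS0 := Hne S HS.
  case H: ((u \notin S) && is_clique e S).
    case/andP: H => HuS Hq.
    have [B0 HB0 HsB0] := clique_block sym univ HS0 HuS Hq.
    rewrite (bigD1 B0) //= HsB0 big1 // => B /andP[HB HBB0].
    case Hs: (S \subset B :\ u) => //.
    case/set0Pn: HS0 => x Hx.
    have := subsetP Hs x Hx; have := subsetP HsB0 x Hx; rewrite !inE => /andP[Hxu Hx0] /andP[_ HxB].
    by rewrite (blk_inter sym univ cliq HB HB0 HxB Hx0 Hxu) eqxx in HBB0.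
  apply: big1 => B HB.
  case Hs: (S \subset B :\ u) => //.
  have HuS : u \notin S by apply/negP => HuS; have := subsetP Hs u HuS; rewrite !inE eqxx.
  have Hq := clique_sub (subset_trans Hs (subD1set _ _)) (cliq _ HB).
  by rewrite HuS Hq in H.
have Hblk : \sum_(B | is_block e B) 'C(#|B| - 1, k) =
    \sum_(S : {set T} | #|S| == k) ((u \notin S) && is_clique e S : nat).
  rewrite -(eq_bigr _ Hper) exchange_big /=; apply: eq_bigr => B HB.
  rewrite sum_bool (cardsD1 u B) (blk_u sym univ cliq HB) add1n subn1 /= -cards_draws.
  by apply: eq_card => S; rewrite !inE andbC.
have Hsum : SW e k + \sum_(S : {set T} | #|S| == k) ((u \notin S) && is_clique e S : nat)
    = (k - 1) * 'C(#|T|, k) + 'C(#|T| - 1, k).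
  rewrite /SW -big_split /=.
  transitivity (\sum_(S : {set T} | #|S| == k) ((k - 1) + (u \notin S : nat))); last first.
    rewrite big_split /= sum_nat_const mulnC; congr (_ * _ + _).
      by rewrite -card_draws; apply: eq_card => S; rewrite inE.
    rewrite sum_bool subn1 -(cardsC1 u) -cards_draws.
    apply: eq_card => S; rewrite !inE andbC; congr (_ && _).
    apply/idP/subsetP => [HuS a Ha|Hs]; first by rewrite !inE; apply: contraNneq HuS => <-.
    by apply/negP => HuS; have := Hs u HuS; rewrite !inE eqxx.
  apply: eq_bigr => S HS; rewrite (sd_val sym irr univ cliq (Hne S HS)) (eqP HS).
    case: (u \in S) => /=; first by rewrite addn0.
    by case: (is_clique e S) => /=; rewrite ?addn0 ?addn1 ?subn1 ?prednK ?addn0 //; apply: ltn_trans Hk2.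
rewrite -(arith Hk) -Hsum Hblk addnK //.
Qed.
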